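(* Under the setting in the context, fix $\kappa\in\{1,\dots,m-1\}$, $j\in\mathcal U$ and $k\in\mathcal C$, and let $t^*=T^{\mathcal U\setminus\{j\}}_{(\kappa)}$. Then, almost surely, $$\mathbb E\Big[\frac{\delta_{j,k}(t^* )}{|\hat{\mathcal S}_c(t^* )|+1}\,\mathbf 1\{T_j\le t^*,\ T_k\le t^*\}\ \Big|\ (X_i,Y_i)_{i\in\mathcal U\setminus\{j\}}\Big]=0.$$
   Context: Setting: $\hat\mu,g:\mathbb R^d\to\mathbb R$ fixed deterministic measurable functions; calibration indices $\mathcal C$ ($|\mathcal C|=n$) and disjoint test indices $\mathcal U$ ($|\mathcal U|=m\ge2$); $(X_i,Y_i)$, $i\in\mathcal C\cup\mathcal U$, i.i.d. with continuous score and residual distributions; $T_i=g(X_i)$, $R_i=|Y_i-\hat\mu(X_i)|$; $\alpha\in(0,1)$. $T^{\mathcal U\setminus\{j\}}_{(\kappa)}$ is the $\kappa$-th smallest value of $\{T_i\}_{i\in\mathcal U\setminus\{j\}}$. For $t\in\mathbb R$: $\hat{\mathcal S}_c(t)=\{i\in\mathcal C:T_i\le t\}$; $\mathcal Q(t)$ is the $\lceil(1-\alpha)(|\hat{\mathcal S}_c(t)|+1)\rceil$-th smallest value of $\{R_i: i\in\hat{\mathcal S}_c(t)\cup\{j\}\}$; and $\delta_{j,k}(t)=\mathbf 1\{R_j>\mathcal Q(t)\}-\mathbf 1\{R_k>\mathcal Q(t)\}$. *)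

(* Defs.v *)
From HB Require Import structures.
From mathcomp Require Import all_boot all_order all_algebra.
From mathcomp Require Import all_classical all_reals all_analysis.
Set Implicit Arguments. Unset Strict Implicit. Unset Printing Implicit Defensive.
Import Order.TTheory GRing.Theory Num.Theory.
Local Open Scope classical_set_scope.
Local Open Scope ring_scope.

(* Index set: calibration indices C = inl 'I_n, test indices U = inr 'I_m. *)
Definition Idx (n m : nat) : finType := ('I_n + 'I_m)%type.

Definition mutually_independent {d : measure_display} {Omega : measurableType d}
  {R : realType} (P : probability Omega R) {I : finType}
  {dV : measure_display} {V : measurableType dV} (Z : I -> Omega -> V) : Prop :=
  forall B : I -> set V, (forall i, measurable (B i)) ->
    P (\bigcap_(i in [set: I]) (Z i @^-1` B i)) =
    (\prod_(i : I) P (Z i @^-1` B i))%E.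

Definition identically_distributed {d : measure_display} {Omega : measurableType d}
  {R : realType} (P : probability Omega R) {I : finType}
  {dV : measure_display} {V : measurableType dV} (Z : I -> Omega -> V) : Prop :=
  forall i i' (B : set V), measurable B -> P (Z i @^-1` B) = P (Z i' @^-1` B).

Definition continuous_distribution {d : measure_display} {Omega : measurableType d}
  {R : realType} (P : probability Omega R) (X : Omega -> R) : Prop :=
  forall t : R, P (X @^-1` [set t]) = 0%E.

(* Conditional expectation: W is a version of E[X | G] (G a sigma-algebra of
   events). "E[X | G] = W almost surely" means exactly that W is a version. *)
Definition is_cond_exp {d : measure_display} {Omega : measurableType d}
  {R : realType} (P : probability Omega R) (G : set (set Omega))
  (X W : Omega -> R) : Prop :=
  [/\ forall B : set R, measurable B -> G (W @^-1` B),
      P.-integrable setT (EFin \o X),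
      P.-integrable setT (EFin \o W) &
      forall A, G A -> (\int[P]_(w in A) (X w)%:E = \int[P]_(w in A) (W w)%:E)%E].

Definition sigma_gen {d : measure_display} {Omega : measurableType d}
  {I : Type} {dV : measure_display} {V : measurableType dV}
  (J : set I) (Z : I -> Omega -> V) : set (set Omega) :=
  <<s [set A | exists i, exists B, [/\ J i, measurable B & A = Z i @^-1` B]] >>.

(* k-th smallest element (1-based, with multiplicity) of a finite list *)
Definition kth_smallest {R : realType} (s : seq R) (k : nat) : R :=
  nth 0 (sort <=%R s) k.-1.

Section Quantities.
Variables (R : realType) (dd : nat) (n m : nat).
Variables (muhat g : dd.-tuple R -> R) (alpha : R).
Variables (Omega : Type) (Z : Idx n m -> Omega -> (dd.-tuple R * R)%type).

Definition Tsc (i : Idx n m) (w : Omega) : R := g (Z i w).1.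
Definition Res (i : Idx n m) (w : Omega) : R := `|(Z i w).2 - muhat (Z i w).1|.

Definition Shat (t : R) (w : Omega) : seq 'I_n :=
  [seq i <- enum 'I_n | Tsc (inl i) w <= t].

Definition Qt (j : 'I_m) (t : R) (w : Omega) : R :=
  kth_smallest (Res (inr j) w :: [seq Res (inl i) w | i <- Shat t w])
    (absz (Num.ceil ((1 - alpha) * (size (Shat t w)).+1%:R))).

Definition delta (j : 'I_m) (k : 'I_n) (t : R) (w : Omega) : R :=
  ((Qt j t w < Res (inr j) w)%R : nat)%:R - ((Qt j t w < Res (inl k) w)%R : nat)%:R.

Definition tstar (j : 'I_m) (kappa : nat) (w : Omega) : R :=
  kth_smallest [seq Tsc (inr i) w | i <- enum 'I_m & i != j] kappa.

Definition lemma10_quantity (j : 'I_m) (k : 'I_n) (kappa : nat) (w : Omega) : R :=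
  let t := tstar j kappa w in
  delta j k t w / (size (Shat t w)).+1%:R *
  (((Tsc (inr j) w <= t) && (Tsc (inl k) w <= t))%R : nat)%:R.

End Quantities.

(* Main.v *)
Require Import Defs.
From HB Require Import structures.
From mathcomp Require Import all_boot all_order all_algebra.
From mathcomp Require Import all_classical all_reals all_analysis.
From Stdlib Require List.
Import Order.TTheory GRing.Theory Num.Theory.
Local Open Scope classical_set_scope.
Local Open Scope ring_scope.

Section Kth.
Variable R : realType.

Lemma sorted_nth_le (u : seq R) (t : R) (i : nat) :
  sorted <=%R u -> (i < size u)%N ->
  (nth 0 u i <= t) = (i < count (fun x : R => (x <= t)%R) u)%N.
Proof.
elim: u i => [|x u IH] i //= Hs Hi.
have Hsu : sorted <=%R u by move: Hs; case: u {IH Hi} => //= y u /andP[].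
have Hall : all (fun y => x <= y) u.
  by move: Hs; rewrite (path_sortedE le_trans) => /andP[].
case Hx: (x <= t) => /=.
  case: i Hi => [|i] Hi //=.
  by rewrite ltnS IH.
have H0 : count (fun y : R => (y <= t)%R) u = 0%N.
  apply/eqP; rewrite -leqn0 leqNgt -has_count; apply/hasPn => y yu.
  apply/negP => yt; move: Hx; rewrite (le_trans _ yt) //.
  exact: (allP Hall).
rewrite H0 add0n ltn0.
case: i Hi => [|i] Hi //=.
apply/negbTE/negP => yt; move: Hx; rewrite (le_trans _ yt) //.
apply: (allP Hall); apply: mem_nth; by rewrite -ltnS.
Qed.

Lemma kth_le (s : seq R) (kk : nat) (t : R) :
  (kk.-1 < size s)%N ->
  (kth_smallest s kk <= t) = (kk.-1 < count (fun x : R => (x <= t)%R) s)%N.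
Proof.
move=> H; rewrite /kth_smallest sorted_nth_le ?sort_sorted ?size_sort //.
  have Hp : perm_eq (sort <=%R s) s by rewrite perm_sort perm_refl.
  by move/permP: Hp => ->.
exact: le_total.
Qed.

Lemma kth_out (s : seq R) (kk : nat) :
  (size s <= kk.-1)%N -> kth_smallest s kk = 0.
Proof. by move=> H; rewrite /kth_smallest nth_default // size_sort. Qed.

End Kth.
Section Meas.
Variables (R : realType) (dO : measure_display) (O : measurableType dO).

Lemma meas_bool (b : O -> bool) : measurable_fun setT b -> measurable [set w | b w].
Proof.
move=> mb; have := mb measurableT [set true]; rewrite setTI; apply => //.
Qed.

Lemma meas_le (f h : O -> R) : measurable_fun setT f -> measurable_fun setT h ->
  measurable [set w | f w <= h w].
Proof. by move=> mf mh; apply: meas_bool; exact: measurable_realfun.measurable_fun_ler. Qed.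

Lemma meas_natR (b : O -> bool) : measurable_fun setT b ->
  measurable_fun setT (fun w => ((b w : nat)%:R : R)).
Proof.
move=> mb; apply: (measurableT_comp (f := fun x : bool => ((x : nat)%:R : R))) => //.
Qed.

Lemma meas_sublevel (h : O -> R) : (forall t, measurable [set w | h w <= t]) ->
  measurable_fun setT h.
Proof.
move=> H.
have E : @measurable _ R = <<s (@measurable_realfun.RGenOInfty.G R) >>.
  exact: (measurable_realfun.RGenOInfty.measurableE R).
apply: (@measurability _ _ O R setT h _ E).
move=> _ [_ [x ->] <-]; rewrite setTI.
have -> : h @^-1` `]x, +oo[%classic = ~` [set w | h w <= x].
  apply/seteqP; split => w /=; rewrite in_itv /= andbT ltNge.
    by move/negP.
  by move/negP.
exact: measurableC.
Qed.

Lemma meas_count (fs : seq (O -> R)) (t : R) : 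
  (forall f, List.In f fs -> measurable_fun setT f) ->
  forall r, measurable [set w | (r <= count (fun f => (f w <= t)%R) fs)%N].
Proof.
elim: fs => [|f fs IH] Hm r /=.
  case: r => [|r].
    by have -> : [set w : O | (0 <= 0)%N] = setT by apply/seteqP; split.
  by have -> : [set w : O | (r.+1 <= 0)%N] = set0 by apply/seteqP; split.
have -> : [set w | (r <= ((f w <= t)%R : nat) + count (fun f0 => (f0 w <= t)%R) fs)%N] =
  ([set w | (f w <= t)%R] `&` [set w | (r.-1 <= count (fun f0 => (f0 w <= t)%R) fs)%N])
  `|` [set w | (r <= count (fun f0 => (f0 w <= t)%R) fs)%N].
  apply/seteqP; split => w /=.
    case: (f w <= t) => /=.
      by rewrite add1n => H; left; split => //; rewrite -ltnS; case: r H.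
    by rewrite add0n => H; right.
  case=> [[-> H]|H].
    by rewrite add1n; case: r H => //= r H; rewrite ltnS.
  by apply: (leq_trans H); rewrite leq_addl.
apply: measurableU; last by apply: IH => g Hg; apply: Hm; right.
apply: measurableI; last by apply: IH => g Hg; apply: Hm; right.
by apply: meas_le => //; apply: Hm; left.
Qed.

Lemma meas_kth (fs : seq (O -> R)) (kk : nat) :
  (forall f, List.In f fs -> measurable_fun setT f) ->
  measurable_fun setT (fun w => kth_smallest [seq f w | f <- fs] kk).
Proof.
move=> Hm.
have [Hs|Hs] := leqP (size fs) kk.-1.
  apply: (eq_measurable_fun (fun _ => (0:R))); first by move=> w _; rewrite kth_out // size_map.
  exact: measurable_cst.
apply: meas_sublevel => t.
have -> : [set w | kth_smallest [seq f w | f <- fs] kk <= t] =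
   [set w | (kk.-1.+1 <= count (fun f => (f w <= t)%R) fs)%N].
  apply/seteqP; split => w /=; rewrite kth_le ?size_map // count_map //.
exact: meas_count.
Qed.
End Meas.

Lemma meas_fin_partition (R : realType) dO (O : measurableType dO) (I : finType)
  (E : I -> set O) (hs : I -> O -> R) (h : O -> R) :
  (forall a, measurable (E a)) -> (forall a, measurable_fun setT (hs a)) ->
  (forall w, exists a, E a w) -> (forall a w, E a w -> h w = hs a w) ->
  measurable_fun setT h.
Proof.
move=> mE mh cov agr _ B mB; rewrite setTI.
have -> : h @^-1` B = \bigcup_(a in [set: I]) (E a `&` hs a @^-1` B).
  apply/seteqP; split => w /=.
    by move=> Bw; have [a Ea] := cov w; exists a => //; split => //=; rewrite -(agr a w Ea).
  by move=> [a _ [Ea Bw]]; rewrite (agr a w Ea).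
apply: fin_bigcup_measurable; first exact: finite_finset.
move=> a _; have := mh a measurableT B mB; rewrite setTI => H.
exact: measurableI.
Qed.

Section Quant.
Variables (R : realType) (dd n m : nat) (muhat g : dd.-tuple R -> R) (alpha : R)
  (j : 'I_m) (k : 'I_n) (kappa : nat).
Hypotheses (mmu : measurable_fun setT muhat) (mg : measurable_fun setT g).
Variables (dO : measure_display) (O : measurableType dO)
  (Zg : Idx n m -> O -> (dd.-tuple R * R)%type).
Hypothesis mZ : forall i, measurable_fun setT (Zg i).

Lemma mTsc i : measurable_fun setT (Tsc g Zg i).
Proof.
rewrite /Tsc; apply: (measurableT_comp mg).
exact: (measurableT_comp measurable_fst (mZ i)).
Qed.

Lemma mRes i : measurable_fun setT (Res muhat Zg i).
Proof.
rewrite /Res; apply: (measurableT_comp (@measurable_realfun.normr_measurable R setT)).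
apply: measurable_realfun.measurable_funB.
  exact: (measurableT_comp measurable_snd (mZ i)).
apply: (measurableT_comp mmu).
exact: (measurableT_comp measurable_fst (mZ i)).
Qed.

Lemma mtstar : measurable_fun setT (tstar g Zg j kappa).
Proof.
apply: (eq_measurable_fun (fun w => kth_smallest
   [seq f w | f <- [seq Tsc g Zg (inr i) | i <- enum 'I_m & i != j]] kappa)).
  by move=> w _; rewrite /tstar -map_comp.
apply: meas_kth => f /List.in_map_iff [i [<- _]].
exact: mTsc.
Qed.

Definition Qs (s : seq 'I_n) (w : O) :=
  kth_smallest (Res muhat Zg (inr j) w :: [seq Res muhat Zg (inl i) w | i <- s])
    (absz (Num.ceil ((1 - alpha) * (size s).+1%:R))).

Definition qw (s : seq 'I_n) (w : O) : R :=
  let t := tstar g Zg j kappa w in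
  (((Qs s w < Res muhat Zg (inr j) w)%R : nat)%:R -
   ((Qs s w < Res muhat Zg (inl k) w)%R : nat)%:R) / (size s).+1%:R *
  (((Tsc g Zg (inr j) w <= t) && (Tsc g Zg (inl k) w <= t))%R : nat)%:R.

Lemma quant_qw w : lemma10_quantity muhat g alpha Zg j k kappa w =
  qw (Shat g Zg (tstar g Zg j kappa w) w) w.
Proof. by []. Qed.

Lemma mQs s : measurable_fun setT (Qs s).
Proof.
apply: (eq_measurable_fun (fun w => kth_smallest
   [seq f w | f <- Res muhat Zg (inr j) :: [seq Res muhat Zg (inl i) | i <- s]]
   (absz (Num.ceil ((1 - alpha) * (size s).+1%:R))))).
  by move=> w _; rewrite /Qs /= -map_comp.
apply: meas_kth => f [<-|/List.in_map_iff [i [<- _]]]; exact: mRes.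
Qed.

Lemma mqw s : measurable_fun setT (qw s).
Proof.
rewrite /qw; apply: measurable_realfun.measurable_funM.
  apply: measurable_realfun.measurable_funM; last exact: measurable_cst.
  apply: measurable_realfun.measurable_funB; apply: meas_natR;
    apply: measurable_realfun.measurable_fun_ltr; (exact: mQs || exact: mRes).
apply: meas_natR; apply: measurable_and;
  apply: measurable_realfun.measurable_fun_ler; (exact: mTsc || exact: mtstar).
Qed.

Lemma mquant : measurable_fun setT (lemma10_quantity muhat g alpha Zg j k kappa).
Proof.
pose E (a : {set 'I_n}) := \bigcap_(i in [set: 'I_n])
  [set w | (i \in a) = (Tsc g Zg (inl i) w <= tstar g Zg j kappa w)].
apply: (@meas_fin_partition R dO O {set 'I_n} E (fun a => qw [seq i <- enum 'I_n | i \in a])).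
- move=> a; apply: fin_bigcap_measurable; first exact: finite_finset.
  move=> i _.
  have mS : measurable [set w | Tsc g Zg (inl i) w <= tstar g Zg j kappa w].
    by apply: meas_le; [exact: mTsc|exact: mtstar].
  case: (i \in a).
    suff -> : [set w | true = (Tsc g Zg (inl i) w <= tstar g Zg j kappa w)] =
      [set w | Tsc g Zg (inl i) w <= tstar g Zg j kappa w] by [].
    by apply/seteqP; split => w /=; [move=> <-|move=> ->].
  suff -> : [set w | false = (Tsc g Zg (inl i) w <= tstar g Zg j kappa w)] =
      ~` [set w | Tsc g Zg (inl i) w <= tstar g Zg j kappa w] by exact: measurableC.
  apply/seteqP; split => w /=; first by move=> <-.
  by move/negP/negbTE => ->.
- move=> a; exact: mqw.
- move=> w; exists (finset (fun i : 'I_n => Tsc g Zg (inl i) w <= tstar g Zg j kappa w)).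
  by move=> i _ /=; rewrite inE.
- move=> a w Ea; rewrite quant_qw; congr qw.
  rewrite /Shat; apply: eq_filter => i; by rewrite (Ea i).
Qed.
End Quant.

Lemma perm_swap_aux (T U : eqType) (S : seq T) (k : T) (h h' : T -> U) (a b : U) :
  uniq S -> k \in S -> h' k = b -> (forall i, i != k -> h' i = h i) -> h k = a ->
  perm_eq (a :: map h' S) (b :: map h S).
Proof.
move=> uS kS hk' Hh hk.
have pS := perm_to_rem kS.
apply: (@perm_trans _ (a :: map h' (k :: rem k S))); first by rewrite perm_cons perm_map.
apply: (@perm_trans _ (b :: map h (k :: rem k S))); last by rewrite perm_cons perm_map // perm_sym.
rewrite /= hk' hk.
have -> : map h' (rem k S) = map h (rem k S).
  by apply/eq_in_map => i; rewrite mem_rem_uniq // inE => /andP[ik _]; exact: Hh.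
change (perm_eq ([:: a; b] ++ map h (rem k S)) ([:: b; a] ++ map h (rem k S))).
rewrite perm_cat2r; apply/permP => p /=; by rewrite addnCA.
Qed.

Section Anti.
Variables (R : realType) (dd n m : nat) (muhat g : dd.-tuple R -> R) (alpha : R)
  (j : 'I_m) (k : 'I_n) (kappa : nat).

Definition sw (i : Idx n m) : Idx n m :=
  if i == inr j then inl k else if i == inl k then inr j else i.

Lemma sw_inv i : sw (sw i) = i.
Proof.
rewrite /sw; case: (eqVneq i (inr j)) => [->|ij]; first by rewrite eqxx.
case: (eqVneq i (inl k)) => [->|ik]; first by rewrite eqxx.
by rewrite (negbTE ij) (negbTE ik).
Qed.

Variables (Om : Type) (Zg : Idx n m -> Om -> (dd.-tuple R * R)%type).

Lemma anti w : lemma10_quantity muhat g alpha (fun i w => Zg (sw i) w) j k kappa w =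
  - lemma10_quantity muhat g alpha Zg j k kappa w.
Proof.
have swj : sw (inr j) = inl k by rewrite /sw eqxx.
have swk : sw (inl k) = inr j by rewrite /sw /= eqxx.
have swr i : i != j -> sw (inr i) = inr i.
  by move=> ij; rewrite /sw /= (inj_eq (@inr_inj _ _)) (negbTE ij).
have swl i : i != k -> sw (inl i) = inl i.
  by move=> ik; rewrite /sw /= (inj_eq (@inl_inj _ _)) (negbTE ik).
set Zs := fun i w => Zg (sw i) w.
have Ht : tstar g Zs j kappa w = tstar g Zg j kappa w.
  rewrite /tstar; congr kth_smallest; apply/eq_in_map => i.
  by rewrite mem_filter => /andP[ij _]; rewrite /Tsc /Zs swr.
rewrite /lemma10_quantity Ht.
set t := tstar g Zg j kappa w.
have Tj : Tsc g Zs (inr j) w = Tsc g Zg (inl k) w by rewrite /Tsc /Zs swj.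
have Tk : Tsc g Zs (inl k) w = Tsc g Zg (inr j) w by rewrite /Tsc /Zs swk.
rewrite Tj Tk.
case Hj: (Tsc g Zg (inr j) w <= t); last by rewrite !andbF /= !mulr0 oppr0.
case Hk: (Tsc g Zg (inl k) w <= t); last by rewrite /= !mulr0 oppr0.
have HS : Shat g Zs t w = Shat g Zg t w.
  rewrite /Shat; apply: eq_filter => i.
  case: (eqVneq i k) => [->|ik]; first by rewrite Tk Hj Hk.
  by rewrite /Tsc /Zs swl.
have HQ : Qt muhat g alpha Zs j t w = Qt muhat g alpha Zg j t w.
  rewrite /Qt HS /kth_smallest; congr nth; apply/perm_sort_leP.
  apply: (@perm_swap_aux _ _ _ k).
  - exact: filter_uniq (enum_uniq _).
  - by rewrite mem_filter mem_enum Hk.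
  - by rewrite /Res /Zs swk.
  - by move=> i ik; rewrite /Res /Zs swl.
  - by rewrite /Res /Zs swj.
rewrite /delta HQ HS.
have Rj : Res muhat Zs (inr j) w = Res muhat Zg (inl k) w by rewrite /Res /Zs swj.
have Rk : Res muhat Zs (inl k) w = Res muhat Zg (inr j) w by rewrite /Res /Zs swk.
by rewrite Rj Rk -!mulNr opprB.
Qed.
End Anti.

Lemma bound_aux (R : realType) (a b d : bool) (c : nat) :
  `|(((a : nat)%:R - (b : nat)%:R) / c.+1%:R * (d : nat)%:R : R)| <= 1.
Proof.
case: d; last by rewrite mulr0 normr0 ler01.
rewrite mulr1 normrM normfV (ger0_norm (ler0n _ _)).
rewrite ler_pdivrMr ?ltr0Sn // mul1r.
apply: (@le_trans _ _ 1); last by rewrite ler1n.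
by case: a; case: b; rewrite /= ?subrr ?normr0 ?ler01 ?subr0 ?sub0r ?normrN ?normr1.
Qed.

Section Integ.
Variables (R : realType) (dd n m : nat) (muhat g : dd.-tuple R -> R) (alpha : R)
  (j : 'I_m) (k : 'I_n) (kappa : nat).
Hypotheses (mmu : measurable_fun setT muhat) (mg : measurable_fun setT g).
Variables (d : measure_display) (Omega : measurableType d) (P : probability Omega R).

Lemma integ_quant (Zg : Idx n m -> Omega -> (dd.-tuple R * R)%type) :
  (forall i, measurable_fun setT (Zg i)) ->
  P.-integrable setT (EFin \o lemma10_quantity muhat g alpha Zg j k kappa).
Proof.
move=> mZ.
apply: (le_integrable measurableT (g := EFin \o cst 1)).
- by apply/measurable_realfun.measurable_EFinP; exact: mquant.
- move=> w _ /=; rewrite lee_fin normr1.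
  exact: bound_aux.
- exact: finite_measure_integrable_cst.
Qed.
End Integ.

Section Prod.
Variables (I : finType) (dV : measure_display) (V : measurableType dV).

Definition rect (B : I -> set V) : set (I -> V) := [set f | forall i, B i (f i)].
Definition G0 : set (set (I -> V)) :=
  [set X | exists B : I -> set V, (forall i, measurable (B i)) /\ X = rect B].
End Prod.
Notation TT I dV V := (g_sigma_algebraType (G0 I dV V)).
Section Prod2.
Variables (I : finType) (dV : measure_display) (V : measurableType dV).

Lemma mproj i : measurable_fun setT (fun f : TT I dV V => f i).
Proof.
move=> _ B0 mB0; rewrite setTI; apply: sub_sigma_algebra.
exists (fun i' => if i' == i then B0 else setT); split.
  by move=> i'; case: (i' == i).
apply/seteqP; split => f /=.
  by move=> H i'; case: eqP => [->|].
by move=> H; have := H i; rewrite eqxx.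
Qed.

Lemma mvec dO (O : measurableType dO) (Y : I -> O -> V) :
  (forall i, measurable_fun setT (Y i)) ->
  measurable_fun setT ((fun w i => Y i w) : O -> TT I dV V).
Proof.
move=> mY; apply: (@measurability _ _ O (TT I dV V) setT _ (G0 I dV V) erefl).
move=> _ [X [B [mB ->]] <-]; rewrite setTI.
have -> : (fun w i => Y i w) @^-1` rect I dV V B = \bigcap_(i in [set: I]) (Y i @^-1` B i).
  apply/seteqP; split => w /= H i; first by move=> _; exact: H.
  exact: H.
apply: fin_bigcap_measurable; first exact: finite_finset.
by move=> i _; have := mY i measurableT (B i) (mB i); rewrite setTI.
Qed.
End Prod2.

Section Law.
Variables (I : finType) (dV : measure_display) (V : measurableType dV).
Variables (R : realType) (d : measure_display) (Omega : measurableType d)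
  (P : probability Omega R) (Z : I -> Omega -> V) (s : I -> I).
Hypotheses (mZ : forall i, measurable_fun setT (Z i))
  (indep : mutually_independent P Z) (ident : identically_distributed P Z)
  (sK : involutive s).

Let Zv : Omega -> TT I dV V := fun w i => Z i w.
Let Zs : Omega -> TT I dV V := fun w i => Z (s i) w.

Lemma law (B : set (TT I dV V)) : measurable B -> P (Zv @^-1` B) = P (Zs @^-1` B).
Proof.
have mZv : measurable_fun setT Zv := @mvec I dV V d Omega Z mZ.
have mZs : measurable_fun setT Zs := @mvec I dV V d Omega (fun i => Z (s i)) (fun i => mZ (s i)).
pose m1 := measure_function_pushforward__canonical__measure_function_Measure P mZv.
pose m2 := measure_function_pushforward__canonical__measure_function_Measure P mZs.
move=> mB.
suff : m1 B = m2 B by [].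
have := @measure_unique _ R (TT I dV V) (G0 I dV V) (fun _ => setT) erefl.
move=> Hu; apply: (Hu _ _ _ m1 m2 _ _ B mB).
- move=> _ _ [B1 [mB1 ->]] [B2 [mB2 ->]].
  exists (fun i => B1 i `&` B2 i); split; first by move=> i; exact: measurableI.
  apply/seteqP; split => f /=; first by move=> [H1 H2] i; split.
  by move=> H; split => i; case: (H i).
- by move=> _; exists (fun _ => setT); split => //; apply/seteqP; split.
- by apply/seteqP; split => // x _; exists 0%N.
- move=> _ [B' [mB' ->]].
  rewrite /m1 /m2 /= /pushforward.
  have -> : Zv @^-1` @rect I dV V B' = \bigcap_(i in [set: I]) (Z i @^-1` B' i).
    apply/seteqP; split => w /= H i; first by move=> _; exact: H.
    exact: H.
  have -> : Zs @^-1` @rect I dV V B' = \bigcap_(i in [set: I]) (Z i @^-1` B' (s i)).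
    apply/seteqP; split => w /= H i; first by move=> _; rewrite -{1}(sK i); exact: H.
    by rewrite -[in B' i](sK i); exact: H.
  rewrite indep // (indep (fun i => B' (s i))); last by move=> i; exact: mB'.
  rewrite (reindex_inj (inv_inj sK)) /=.
  apply: eq_bigr => i _.
  by apply: ident; exact: mB'.
- by move=> _; rewrite /m1 /= /pushforward preimage_setT probability_setT ltry.
Qed.
End Law.

Theorem lemma10 (R : realType) (dd n m : nat)
  (muhat g : dd.-tuple R -> R) (alpha : R)
  (d : measure_display) (Omega : measurableType d) (P : probability Omega R)
  (Z : Idx n m -> Omega -> (dd.-tuple R * R)%type)
  (kappa : nat) (j : 'I_m) (k : 'I_n) :
  measurable_fun setT muhat -> measurable_fun setT g ->
  (2 <= m)%N -> 0 < alpha < 1 ->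
  (forall i, measurable_fun setT (Z i)) ->
  mutually_independent P Z -> identically_distributed P Z ->
  (forall i, continuous_distribution P (Tsc g Z i)) ->
  (forall i, continuous_distribution P (Res muhat Z i)) ->
  (1 <= kappa <= m.-1)%N ->
  is_cond_exp P
    (sigma_gen [set i : Idx n m | exists i', i = inr i' /\ i' != j] Z)
    (lemma10_quantity muhat g alpha Z j k kappa)
    (fun _ => 0).
Proof.
move=> mmu mg _ _ mZ indep ident _ _ _.
set X := lemma10_quantity muhat g alpha Z j k kappa.
pose s := sw n m j k.
have sK : involutive s := sw_inv n m j k.
pose Zs := fun i w => Z (s i) w.
have mZs : forall i, measurable_fun setT (Zs i) by move=> i; exact: mZ.
set X' := lemma10_quantity muhat g alpha Zs j k kappa.
have intX : P.-integrable setT (EFin \o X) by apply: integ_quant.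
have intX' : P.-integrable setT (EFin \o X') by apply: integ_quant.
have antiX : forall w, X' w = - X w by move=> w; exact: anti.
pose Zv : Omega -> (TT (Idx n m) _ (dd.-tuple R * R)%type) := fun w i => Z i w.
pose Zv' : Omega -> (TT (Idx n m) _ (dd.-tuple R * R)%type) := fun w i => Zs i w.
have mZv : measurable_fun setT Zv by exact: mvec.
have mZv' : measurable_fun setT Zv' by exact: mvec.
split.
- move=> B mB; rewrite /sigma_gen.
  case: (pselect (B 0)) => B0.
    have -> : (fun _ : Omega => 0) @^-1` B = ~` set0.
      by apply/seteqP; split => w //= _.
    by apply: sigma_algebraC; exact: sigma_algebra0.
  have -> : (fun _ : Omega => 0) @^-1` B = set0.
    by apply/seteqP; split => w //=.
  exact: sigma_algebra0.
- exact: intX.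
- have := finite_measure_integrable_cst P (0:R) (@measurableT _ Omega). by [].
move=> A HA.
have [B [mB [HA1 HA2]]] : exists B : set (TT (Idx n m) _ (dd.-tuple R * R)%type),
    measurable B /\ A = Zv @^-1` B /\ A = Zv' @^-1` B.
  pose Fam := [set A : set Omega | exists B : set (TT (Idx n m) _ (dd.-tuple R * R)%type),
    measurable B /\ A = Zv @^-1` B /\ A = Zv' @^-1` B].
  suff : sigma_gen [set i : Idx n m | exists i', i = inr i' /\ i' != j] Z `<=` Fam.
    by move=> /(_ A HA).
  apply: smallest_sub.
    split.
    - by exists set0; split => //; rewrite !preimage_set0.
    - move=> A' [B' [mB' [H1 H2]]]; exists (~` B'); split; first exact: measurableC.
      by rewrite setTD -!preimage_setC -H1 -H2.
    - move=> F HF.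
      have [Bs HBs] := choice HF.
      exists (\bigcup_i Bs i); split; first by apply: bigcupT_measurable => i; case: (HBs i).
      have E1 : F = fun i => Zv @^-1` Bs i by apply/funext => i; case: (HBs i) => _ [].
      have E2 : F = fun i => Zv' @^-1` Bs i by apply/funext => i; case: (HBs i) => _ [].
      by split; rewrite preimage_bigcup; [rewrite {1}E1|rewrite {1}E2].
  move=> _ [i [B0 [[i' [-> ij]] mB0 ->]]].
  exists [set f : (TT (Idx n m) _ (dd.-tuple R * R)%type) | B0 (f (inr i'))]; split.
    by have := @mproj (Idx n m) _ (dd.-tuple R * R)%type (inr i') measurableT B0 mB0; rewrite setTI.
  split => //.
  have Hs : s (inr i') = inr i' by rewrite /s /sw /= (inj_eq (@inr_inj _ _)) (negbTE ij).
  by apply/seteqP; split => w /=; rewrite /Zv' /Zs Hs.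
rewrite [RHS]integral0_eq //.
have mA : measurable A by have := mZv measurableT B mB; rewrite setTI -HA1.
pose F := lemma10_quantity muhat g alpha (fun i (f : (TT (Idx n m) _ (dd.-tuple R * R)%type)) => f i) j k kappa.
have mF : measurable_fun setT F.
  apply: mquant => //; exact: mproj.
have mEF := (measurable_realfun.measurable_EFinP _ F).2 mF.
have intA : P.-integrable A (EFin \o X) by apply: (integrableS measurableT mA).
have intA' : P.-integrable A (EFin \o X') by apply: (integrableS measurableT mA).
have I1 := @integral_pushforward _ _ Omega (TT (Idx n m) _ (dd.-tuple R * R)%type) R Zv mZv P B (EFin \o F) mEF
  (eq_ind A (fun D => P.-integrable D (EFin \o X)) intA _ HA1) mB.
have I2 := @integral_pushforward _ _ Omega (TT (Idx n m) _ (dd.-tuple R * R)%type) R Zv' mZv' P B (EFin \o F) mEF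
  (eq_ind A (fun D => P.-integrable D (EFin \o X')) intA' _ HA2) mB.
pose m1 := measure_function_pushforward__canonical__measure_function_Measure P mZv.
pose m2 := measure_function_pushforward__canonical__measure_function_Measure P mZv'.
have I3 : (\int[m1]_(y in B) (EFin \o F) y = \int[m2]_(y in B) (EFin \o F) y)%E.
  apply: eq_measure_integral => A' mA' _.
  exact: law.
have Hab : (\int[P]_(w in A) (X w)%:E = \int[P]_(w in A) (X' w)%:E)%E.
  rewrite {1}HA1 {1}HA2.
  exact: (etrans (esym I1) (etrans I3 I2)).
have Hsum : (\int[P]_(w in A) (X w)%:E + \int[P]_(w in A) (X' w)%:E = 0)%E.
  rewrite -integralD //; apply: integral0_eq => w _.
  by rewrite antiX -EFinD addrN.
have := integrable_fin_num mA intA.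
rewrite -Hab in Hsum.
move: Hsum; case: (\int[P]_(w in A) (X w)%:E)%E => // r /eqP.
rewrite -EFinD eqe => /eqP Hr _; congr EFin.
by move: Hr; rewrite -mulr2n -mulr_natr => /eqP; rewrite mulf_eq0 pnatr_eq0 orbF => /eqP.
Qed.
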